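(* For $\beta\in\mathcal D$ let $\mathcal C_\beta=\{\alpha\in\mathcal C:\mathrm{supp}\,\alpha\subseteq\mathrm{supp}\,\beta\}$, viewed as a code of length $|\beta|$ on $\mathrm{supp}\,\beta$. Then: (1) if $|\beta|=16$, $\mathcal C_\beta\cong\mathrm{RM}(2,4)$; (2) if $|\beta|=24$, $\mathcal C_\beta\cong\{(\alpha,\gamma,\delta)\in(\mathbb Z_2^8)^3:\alpha,\gamma,\delta\text{ even},\ \alpha+\gamma+\delta\in H_8\}$; (3) if $|\beta|=32$, $\mathcal C_\beta\cong\mathrm{RM}(3,5)$; (4) if $|\beta|=48$, $\mathcal C_\beta=\mathcal C$. Consequently, for $\beta\neq0$, $\mathcal C_\beta$ contains a subcode which is self-dual in $\mathbb Z_2^{\mathrm{supp}\,\beta}$ and isomorphic to a direct sum of $|\beta|/8$ copies of $H_8$.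
   Context: $\mathcal D\subseteq\mathbb Z_2^{48}$ is spanned by $1^{16}0^{32}$, $0^{16}1^{16}0^{16}$, $0^{32}1^{16}$, $(0^81^8)^3$, $(0^41^4)^6$, $(0011)^{12}$, $(0101)^{12}$; its nonzero weights are $16,24,32,48$. $\mathcal C=\mathcal D^\perp$. $\mathrm{RM}(r,m)$ denotes the $r$-th order binary Reed–Muller code of length $2^m$. $H_8$ is the extended Hamming $[8,4,4]$ code spanned by $11111111$, $11110000$, $11001100$, $10101010$ (so $H_8\cong\mathrm{RM}(1,3)$). Isomorphism of codes means equality up to a permutation of coordinates. *)

(* Defs.v *)
From HB Require Import structures.
From mathcomp Require Import all_boot all_order all_algebra.
Set Implicit Arguments. Unset Strict Implicit. Unset Printing Implicit Defensive.
Import GRing.Theory.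
Local Open Scope ring_scope.

Notation word n := 'rV['F_2]_n.

Definition supp n (v : word n) : {set 'I_n} := [set i | v 0 i != 0].
Definition wt n (v : word n) : nat := #|supp v|.

Definition dot n (u v : word n) : 'F_2 := (u *m v^T) 0 0.

Definition span_of n k (g : 'I_k -> word n) : {set word n} :=
  [set \sum_(i < k) c i *: g i | c : {ffun 'I_k -> 'F_2}].

Definition gD (k : 'I_7) : word 48 :=
  \row_(i < 48)
   (match val k with
    | 0 => (i < 16)%N
    | 1 => (16 <= i < 32)%N
    | 2 => (32 <= i)%N
    | 3 => odd (i %/ 8)
    | 4 => odd (i %/ 4)
    | 5 => odd (i %/ 2)
    | _ => odd i
    end)%:R.

Definition D : {set word 48} := span_of gD.
Definition C : {set word 48} := [set a | [forall b in D, dot a b == 0]].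

Definition Cb (beta : word 48) : {set word 48} :=
  [set a in C | supp a \subset supp beta].

(* Isomorphism (up to coordinate permutation) of a code A of length N living on
   the coordinate set S with a code B of length n: a bijection sigma from 'I_n onto S
   such that restricting A along sigma gives exactly B. *)
Definition restr N n (sigma : 'I_n -> 'I_N) (a : word N) : word n :=
  \row_(j < n) a 0 (sigma j).
Definition code_iso N (S : {set 'I_N}) (A : {set word N}) n (B : {set word n}) : Prop :=
  exists sigma : 'I_n -> 'I_N,
    [/\ injective sigma, (forall i, (i \in S) = (i \in codom sigma))
      & [set restr sigma a | a in A] = B].

(* Reed-Muller code RM(r,m): coordinates j < 2^m identified with points of F_2^m
   via binary digits; spanned by evaluations of monomials of degree <= r. *)
Definition monom m (T : {set 'I_m}) : word (2 ^ m) :=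
  \row_(j < 2 ^ m) \prod_(i in T) (odd (j %/ 2 ^ i))%:R.
Definition RM (r m : nat) : {set word (2 ^ m)} :=
  [set \sum_(T : {set 'I_m} | (#|T| <= r)%N) c T *: monom T
     | c : {ffun {set 'I_m} -> 'F_2}].

Definition gH (k : 'I_4) : word 8 :=
  \row_(i < 8)
   (match val k with
    | 0 => true
    | 1 => (i < 4)%N
    | 2 => ~~ odd (i %/ 2)
    | _ => ~~ odd i
    end)%:R.
Definition H8 : {set word 8} := span_of gH.

Definition blk n (v : word n) (k : nat) : word 8 :=
  \row_(t < 8) (if insub (k * 8 + t)%N is Some i then v 0 i else 0).

Definition Code24 : {set word 24} :=
  [set v | [forall k : 'I_3, ~~ odd (wt (blk v k))]
           && (blk v 0 + blk v 1 + blk v 2 \in H8)].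

Definition H8sum (k : nat) : {set word (8 * k)} :=
  [set v | [forall b : 'I_k, blk v b \in H8]].

Definition self_dual_on N (S : {set 'I_N}) (A : {set word N}) : Prop :=
  A = [set a | (supp a \subset S) && [forall b in A, dot a b == 0]].

(* Main.v *)
Require Import Defs.
From mathcomp Require Import all_boot all_order all_algebra.
From mathcomp Require Import zify.
Set Implicit Arguments. Unset Strict Implicit. Unset Printing Implicit Defensive.
Import GRing.Theory.
Local Open Scope ring_scope.

Lemma F2_cases (x : 'F_2) : x = (x != 0)%:R.
Proof. by case: x => [[|[|]]] //= i; apply/val_inj. Qed.

Lemma F2_natr n : (n%:R : 'F_2) = (odd n)%:R.
Proof.
by rewrite -(GRing.natr_mod_pchar (p:=2)) ?modn2 //.
Qed.

Lemma F2_bneq0 (b : bool) : (((b%:R) : 'F_2) != 0) = b.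
Proof. by case: b; rewrite ?oner_eq0 ?eqxx. Qed.

Lemma sum_F2 (I : Type) (r : seq I) (P : pred I) (F : I -> bool) :
  \sum_(i <- r | P i) ((F i)%:R : 'F_2) = (odd (\sum_(i <- r | P i) (F i : nat)))%:R.
Proof. by rewrite -F2_natr natr_sum. Qed.

Lemma dotE n (x y : word n) : dot x y = \sum_i x 0 i * y 0 i.
Proof. by rewrite /dot !mxE; apply: eq_bigr => i _; rewrite mxE. Qed.
Lemma sumb_count (I : Type) (r : seq I) (P : pred I) :
  (\sum_(i <- r) (P i : nat) = count P r)%N.
Proof. by elim: r => [|x r IH]; rewrite ?big_nil // big_cons IH. Qed.

Lemma sum_ord_iota k (F : nat -> nat) :
  (\sum_(l < k) F l = \sum_(l <- iota 0 k) F l)%N.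
Proof. by rewrite -(big_mkord xpredT) /index_iota subn0. Qed.

Fixpoint lists n : seq (seq bool) :=
  if n is n'.+1 then [seq b :: l | b <- [:: false; true], l <- lists n'] else [:: [::]].

Lemma size_lists k a : a \in lists k -> size a = k.
Proof.
elim: k a => [|k IH] a; first by rewrite inE => /eqP ->.
by rewrite [lists _]/= !mem_cat in_nil orbF => /orP[]/mapP[l /IH <- ->].
Qed.

Lemma mem_lists k a : size a = k -> a \in lists k.
Proof.
elim: k a => [|k IH] [|b a] //= [/IH Ha].
by case: b; rewrite [lists _]/= !mem_cat map_f ?orbT.
Qed.

Definition comb (hb : nat -> nat -> bool) (a : seq bool) (j : nat) : bool :=
  odd (count (fun l => nth false a l && hb l j) (iota 0 (size a))).

Definition in_spanb k (hb : nat -> nat -> bool) (vb : nat -> bool) n : bool :=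
  has (fun a => all (fun j => comb hb a j == vb j) (iota 0 n)) (lists k).

Definition rowb n (f : nat -> bool) : word n := \row_(j < n) (f j)%:R.

Definition cl k (c : {ffun 'I_k -> 'F_2}) : seq bool := [seq c l != 0 | l <- enum 'I_k].

Lemma size_cl k (c : {ffun 'I_k -> 'F_2}) : size (cl c) = k.
Proof. by rewrite size_map size_enum_ord. Qed.

Lemma nth_cl k (c : {ffun 'I_k -> 'F_2}) (l : 'I_k) : nth false (cl c) l = (c l != 0).
Proof. by rewrite (nth_map l) ?nth_ord_enum // size_enum_ord. Qed.

Lemma natrM_b (a b : bool) : ((a%:R : 'F_2) * b%:R) = (a && b)%:R.
Proof. by case: a; case: b; rewrite ?mulr1 ?mulr0 ?mul0r. Qed.

Lemma comb_sum k n (h : 'I_k -> word n) (hb : nat -> nat -> bool) (c : {ffun 'I_k -> 'F_2}) j :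
  (forall (l : 'I_k) (j : 'I_n), h l 0 j = (hb l j)%:R) ->
  (\sum_l c l *: h l) 0 j = (comb hb (cl c) j)%:R.
Proof.
move=> Hh; rewrite summxE.
under eq_bigr => l _ do rewrite mxE Hh [c l]F2_cases natrM_b -nth_cl.
rewrite sum_F2 /comb size_cl -sumb_count.
by rewrite (sum_ord_iota k (fun l => nth false (cl c) l && hb l j)).
Qed.

Lemma in_spanbP k n (h : 'I_k -> word n) (hb : nat -> nat -> bool) (v : word n) (vb : nat -> bool) :
  (forall (l : 'I_k) (j : 'I_n), h l 0 j = (hb l j)%:R) ->
  (forall j : 'I_n, v 0 j = (vb j)%:R) ->
  in_spanb k hb vb n -> v \in span_of h.
Proof.
move=> Hh Hv /hasP [a /size_lists Ha /allP Hall].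
apply/imsetP; exists [ffun l : 'I_k => (nth false a l)%:R] => //.
apply/rowP => j; rewrite (comb_sum _ _ Hh) Hv.
have -> : cl [ffun l : 'I_k => (nth false a l)%:R] = a.
  apply: (@eq_from_nth _ false); rewrite size_cl ?Ha // => i Hi.
  by rewrite -[i]/(val (Ordinal Hi)) nth_cl ffunE F2_bneq0.
have Hj : (val j \in iota 0 n) by rewrite mem_iota ltn_ord.
by move/eqP: (Hall j Hj) => ->.
Qed.

Definition perp n k (h : 'I_k -> word n) : {set word n} :=
  [set x | [forall l, dot x (h l) == 0]].

Lemma dotC n (x y : word n) : dot x y = dot y x.
Proof. by rewrite !dotE; apply: eq_bigr => i _; rewrite mulrC. Qed.

Lemma dot_sumr n k (x : word n) (h : 'I_k -> word n) (c : 'I_k -> 'F_2) :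
  dot x (\sum_l c l *: h l) = \sum_l c l * dot x (h l).
Proof.
rewrite dotE; under eq_bigr => i _ do rewrite summxE mulr_sumr.
rewrite exchange_big /=; apply: eq_bigr => l _.
rewrite dotE mulr_sumr; apply: eq_bigr => i _.
by rewrite mxE mulrCA.
Qed.

Lemma perpP n k (h : 'I_k -> word n) x :
  reflect (forall l, dot x (h l) = 0) (x \in perp h).
Proof.
rewrite inE; apply: (iffP forallP) => H l; first by apply/eqP.
by rewrite H.
Qed.

Lemma perp_span n k (h : 'I_k -> word n) x v :
  x \in perp h -> v \in span_of h -> dot x v = 0.
Proof.
move=> /perpP Hx /imsetP [c _ ->]; rewrite dot_sumr big1 // => l _.
by rewrite Hx mulr0.
Qed.

Lemma perp_sub n k1 k2 (h : 'I_k1 -> word n) (u : 'I_k2 -> word n) :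
  (forall l, h l \in span_of u) -> perp u \subset perp h.
Proof.
move=> H; apply/subsetP => x Hx; apply/perpP => l.
exact: perp_span Hx (H l).
Qed.

Lemma perp_eq n k1 k2 (h : 'I_k1 -> word n) (u : 'I_k2 -> word n) :
  (forall l, h l \in span_of u) -> (forall l, u l \in span_of h) -> perp h = perp u.
Proof.
by move=> H1 H2; apply/eqP; rewrite eqEsubset !perp_sub.
Qed.

Lemma C_perp : C = perp gD.
Proof.
apply/setP => a; rewrite !inE; apply/forallP/forallP => H.
  move=> l; move/implyP: (H (gD l)); apply; apply/imsetP.
  exists [ffun l' => (l' == l)%:R] => //.
  rewrite (bigD1 l) //= big1 ?ffunE ?eqxx ?scale1r ?addr0 // => l' Hl.
  by rewrite ffunE (negbTE Hl) scale0r.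
move=> b; apply/implyP => Hb.
by rewrite (@perp_span _ _ gD) //; apply/perpP => l; apply/eqP.
Qed.

Definition ext N n (sigma : 'I_n -> 'I_N) (v : word n) : word N :=
  \row_i (if [pick j | sigma j == i] is Some j then v 0 j else 0).

Section Ext.
Variables (N n : nat) (sigma : 'I_n -> 'I_N).
Hypothesis inj : injective sigma.

Lemma ext_sigma v j : ext sigma v 0 (sigma j) = v 0 j.
Proof.
rewrite mxE; case: pickP => [j' /eqP /inj -> //|/(_ j)].
by rewrite eqxx.
Qed.

Lemma ext_out v i : i \notin codom sigma -> ext sigma v 0 i = 0.
Proof.
move=> Hi; rewrite mxE; case: pickP => // j /eqP Hj.
by move: Hi; rewrite -Hj codom_f.
Qed.

Lemma restr_ext v : restr sigma (ext sigma v) = v.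
Proof. by apply/rowP => j; rewrite mxE ext_sigma. Qed.

Lemma supp_ext v : supp (ext sigma v) \subset codom sigma.
Proof.
apply/subsetP => i; rewrite inE; apply: contraR => Hi.
by rewrite ext_out.
Qed.

Lemma dot_restr (a g : word N) :
  supp a \subset codom sigma -> dot a g = dot (restr sigma a) (restr sigma g).
Proof.
move=> /subsetP Ha; rewrite !dotE.
rewrite (bigID (mem (sigma @: setT))) /= [X in _ + X]big1 ?addr0.
  rewrite big_imset /=; last by move=> x y _ _; apply: inj.
  by apply: eq_big => [j|j _]; rewrite ?inE ?mxE.
move=> i Hi.
have : a 0 i == 0.
  apply: contraR Hi => Hai; have := Ha i; rewrite inE => /(_ Hai).
  by case/codomP => j ->; rewrite imset_f.
by move/eqP ->; rewrite mul0r.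
Qed.

Lemma dot_ext v g : dot (ext sigma v) g = dot v (restr sigma g).
Proof. by rewrite (dot_restr _ (supp_ext v)) restr_ext. Qed.

End Ext.

Lemma restr_Cb n (beta : word 48) (sigma : 'I_n -> 'I_48) :
  injective sigma -> (forall i, (i \in supp beta) = (i \in codom sigma)) ->
  [set restr sigma a | a in Cb beta] = perp (fun l => restr sigma (gD l)).
Proof.
move=> inj Hs; have Hsupp : supp beta = [set i | i \in codom sigma].
  by apply/setP => i; rewrite Hs inE.
apply/setP => x; apply/imsetP/idP.
  case=> a; rewrite inE C_perp => /andP [/perpP Ha Hsub] ->.
  apply/perpP => l; rewrite -dot_restr ?Ha //.
  apply: (subset_trans Hsub); rewrite Hsupp; apply/subsetP => i; rewrite inE.
  done.
move=> Hx; exists (ext sigma x); last by rewrite restr_ext.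
rewrite inE C_perp; apply/andP; split.
  by apply/perpP => l; rewrite dot_ext //; move/perpP: Hx ->.
rewrite Hsupp; apply/subsetP => i /(subsetP (@supp_ext _ _ sigma x)); by rewrite inE.
Qed.

Definition dotb (xb yb : nat -> bool) n : bool :=
  odd (count (fun j => xb j && yb j) (iota 0 n)).

Lemma dot_b n (x y : word n) (xb yb : nat -> bool) :
  (forall j : 'I_n, x 0 j = (xb j)%:R) -> (forall j : 'I_n, y 0 j = (yb j)%:R) ->
  dot x y = (dotb xb yb n)%:R.
Proof.
move=> Hx Hy; rewrite dotE.
under eq_bigr => j _ do rewrite Hx Hy natrM_b.
by rewrite sum_F2 (sum_ord_iota n (fun j => xb j && yb j)) sumb_count.
Qed.

Lemma dotD n (x y z : word n) : dot x (y + z) = dot x y + dot x z.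
Proof. by rewrite !dotE -big_split; apply: eq_bigr => i _; rewrite mxE mulrDr. Qed.

Lemma dotZ n (x y : word n) c : dot x (c *: y) = c * dot x y.
Proof. by rewrite !dotE mulr_sumr; apply: eq_bigr => i _; rewrite mxE mulrCA. Qed.

Lemma dot0 n (x : word n) : dot x 0 = 0.
Proof. by rewrite dotE big1 // => i _; rewrite mxE mulr0. Qed.

Lemma dot_sum n (x : word n) (I : Type) (s : seq I) (P : pred I) (F : I -> word n) :
  dot x (\sum_(i <- s | P i) F i) = \sum_(i <- s | P i) dot x (F i).
Proof. by apply: (big_morph _ (dotD x) (dot0 x)). Qed.

Definition vl n (y : word n) : seq bool := [seq y 0 i != 0 | i <- enum 'I_n].

Lemma vl_lists n (y : word n) : vl y \in lists n.
Proof. by apply: mem_lists; rewrite size_map size_enum_ord. Qed.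

Lemma vlE n (y : word n) (j : 'I_n) : y 0 j = (nth false (vl y) j)%:R.
Proof. by rewrite (nth_map j) ?size_enum_ord // nth_ord_enum -F2_cases. Qed.

Lemma all_iota_ord m (G : nat -> bool) : all G (iota 0 m) = [forall i : 'I_m, G i].
Proof.
apply/allP/forallP => [H i|H i]; first by apply: H; rewrite mem_iota ltn_ord.
by rewrite mem_iota /= => Hi; apply: (H (Ordinal Hi)).
Qed.

Definition vv n (v : word n) (j : nat) : 'F_2 := if insub j is Some i then v 0 i else 0.

Lemma vvE n (v : word n) (i : 'I_n) : vv v i = v 0 i.
Proof. by rewrite /vv; case: insubP => [i' _ /val_inj -> //|]; rewrite ltn_ord. Qed.

Lemma vv_out n (v : word n) j : (n <= j)%N -> vv v j = 0.
Proof. by rewrite /vv; case: insubP => // i' Hi _; rewrite leqNgt Hi. Qed.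

Lemma dot_nat n (v w : word n) : dot v w = \sum_(0 <= j < n) vv v j * vv w j.
Proof.
rewrite dotE big_mkord; by apply: eq_bigr => j _; rewrite !vvE.
Qed.

Lemma sum_blocks (F : nat -> 'F_2) k :
  \sum_(0 <= j < 8 * k) F j = \sum_(0 <= b < k) \sum_(0 <= t < 8) F (b * 8 + t)%N.
Proof.
elim: k => [|k IH]; first by rewrite !big_geq.
rewrite [RHS]big_nat_recr //= -IH mulnS addnC (big_cat_nat _ (n := (8 * k)%N)) //=; last by rewrite leq_addr.
congr (_ + _).
rewrite -{1}[(8 * k)%N]add0n big_addn. rewrite addKn; apply: eq_bigr => t _.
by rewrite addnC mulnC.
Qed.

Lemma blkE n (v : word n) b t : blk v b 0 t = vv v (b * 8 + t)%N.
Proof. by rewrite mxE. Qed.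

Lemma dot_blocks k (v w : word (8 * k)) :
  dot v w = \sum_(b < k) dot (blk v b) (blk w b).
Proof.
rewrite dot_nat sum_blocks big_mkord; apply: eq_bigr => b _.
rewrite dotE; under [RHS]eq_bigr => t _ do rewrite !blkE.
by rewrite -(big_mkord xpredT (fun t => vv v (b * 8 + t)%N * vv w (b * 8 + t)%N)).
Qed.

Definition gHb (l t : nat) : bool :=
  match l with 0 => true | 1 => (t < 4)%N | 2 => ~~ odd (t %/ 2) | _ => ~~ odd t end.

Lemma gHE (l : 'I_4) (t : 'I_8) : gH l 0 t = (gHb l t)%:R.
Proof. by rewrite mxE; case: l => [[|[|[|[|l]]]] Hl]. Qed.

Lemma Hgg : all (fun l => all (fun l' => ~~ dotb (gHb l) (gHb l') 8) (iota 0 4)) (iota 0 4).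
Proof. by vm_compute. Qed.

Lemma HH8 : all (fun yl => (all (fun l => ~~ dotb (nth false yl) (gHb l) 8) (iota 0 4))
   ==> in_spanb 4 gHb (nth false yl) 8) (lists 8).
Proof. by vm_compute. Qed.

Lemma gH_orth (l l' : 'I_4) : dot (gH l) (gH l') = 0.
Proof.
rewrite (@dot_b _ _ _ (gHb l) (gHb l') (gHE l) (gHE l')).
have := Hgg; rewrite all_iota_ord => /forallP /(_ l).
rewrite all_iota_ord => /forallP /(_ l') /negbTE -> //.
Qed.

Lemma gH_in (l : 'I_4) : gH l \in H8.
Proof.
apply/imsetP; exists [ffun l' => (l' == l)%:R] => //.
rewrite (bigD1 l) //= big1 ?ffunE ?eqxx ?scale1r ?addr0 // => l' Hl.
by rewrite ffunE (negbTE Hl) scale0r.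
Qed.

Lemma H8P (y : word 8) : (y \in H8) = [forall l, dot y (gH l) == 0].
Proof.
apply/idP/forallP => [/imsetP [c _ ->] l|H].
  rewrite dotC dot_sumr big1 // => l' _; by rewrite gH_orth mulr0.
apply: (in_spanbP gHE (vlE y)).
move/allP: HH8 => /(_ _ (vl_lists y)) /implyP; apply.
rewrite all_iota_ord; apply/forallP => l.
have := H l; rewrite (@dot_b _ _ _ (nth false (vl y)) (gHb l) (vlE y) (gHE l)).
by move=> Hl; rewrite -(F2_bneq0 (dotb _ _ _)) negbK.
Qed.

Lemma H8_orth (y z : word 8) : y \in H8 -> z \in H8 -> dot y z = 0.
Proof.
move=> Hy Hz; apply: (@perp_span _ _ gH) => //.
by rewrite inE -H8P.
Qed.

Lemma H8_0 : (0 : word 8) \in H8.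
Proof. by rewrite H8P; apply/forallP => l; rewrite dotC dot0. Qed.

Definition place k (b : nat) (y : word 8) : word (8 * k) :=
  \row_(j < 8 * k) (if (j %/ 8 == b)%N then vv y (j %% 8) else 0).

Lemma vv_blk k (v : word (8 * k)) (b : 'I_k) (t : 'I_8) (P : (b * 8 + t < 8 * k)%N) :
  vv v (b * 8 + t) = v 0 (Ordinal P).
Proof. by rewrite -vvE. Qed.

Lemma lt_blk k (b : 'I_k) (t : 'I_8) : (b * 8 + t < 8 * k)%N.
Proof.
have Hb := ltn_ord b; have Ht := ltn_ord t.
lia.
Qed.

Lemma div_blk (b t : nat) : (t < 8)%N -> ((b * 8 + t) %/ 8 = b)%N /\ ((b * 8 + t) %% 8 = t)%N.
Proof.
move=> Ht; split; first by rewrite divnMDl // divn_small ?addn0.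
by rewrite modnMDl modn_small.
Qed.

Lemma blk_place k (b b' : 'I_k) y : blk (place k b y) b' = if b' == b then y else 0.
Proof.
apply/rowP => t; rewrite blkE (vv_blk _ (lt_blk b' t)) mxE /=.
have [-> ->] := div_blk b' (ltn_ord t).
case: eqP => H1; case: eqP => H2; rewrite ?vvE ?mxE //.
- by case: H2; apply: val_inj.
- by case: H1; rewrite H2.
Qed.

Lemma H8sumP k (x : word (8 * k)) :
  (x \in H8sum k) = [forall w in H8sum k, dot x w == 0].
Proof.
apply/idP/forallP => [Hx w|H].
  apply/implyP => Hw; rewrite dot_blocks big1 // => b _.
  by apply: H8_orth; [move: Hx | move: Hw]; rewrite inE => /forallP.
rewrite inE; apply/forallP => b; rewrite H8P; apply/forallP => l.
have Hw : place k b (gH l) \in H8sum k.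
  rewrite inE; apply/forallP => b'; rewrite blk_place.
  by case: (b' == b); rewrite ?gH_in ?H8_0.
move/implyP: (H (place k b (gH l))) => /(_ Hw).
rewrite dot_blocks (bigD1 b) //= big1 ?addr0 ?blk_place ?eqxx //.
by move=> b' /negbTE Hb; rewrite blk_place Hb dot0.
Qed.

Lemma ext_restr N n (sigma : 'I_n -> 'I_N) (a : word N) :
  injective sigma -> supp a \subset codom sigma -> ext sigma (restr sigma a) = a.
Proof.
move=> inj /subsetP Ha; apply/rowP => i.
case: (boolP (i \in codom sigma)) => [/codomP [j ->]|Hi].
  by rewrite ext_sigma // mxE.
rewrite ext_out //; apply/esym/eqP; apply: contraR Hi => Hai.
by apply: Ha; rewrite inE.
Qed.

Lemma final_part k (beta : word 48) (sigma : 'I_(8 * k) -> 'I_48) :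
  injective sigma -> (forall i, (i \in supp beta) = (i \in codom sigma)) ->
  (forall l, restr sigma (gD l) \in H8sum k) ->
  exists S : {set word 48},
    [/\ S \subset Cb beta, self_dual_on (supp beta) S & code_iso (supp beta) S (H8sum k)].
Proof.
move=> inj Hs Hg.
have Hsupp : forall a : word 48, (supp a \subset supp beta) = (supp a \subset codom sigma).
  move=> a; apply/subsetP/subsetP => H i /H; by rewrite Hs.
have Horth : forall v w, v \in H8sum k -> w \in H8sum k -> dot v w = 0.
  by move=> v w; rewrite H8sumP => /forallP /(_ w) /implyP H /H /eqP.
exists [set ext sigma v | v in H8sum k]; split.
- apply/subsetP => _ /imsetP [v Hv ->]; rewrite inE C_perp Hsupp supp_ext andbT.
  by apply/perpP => l; rewrite dot_ext // Horth.
- apply/setP => a; rewrite inE Hsupp; apply/idP/andP.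
    case/imsetP => v Hv ->; split; first exact: supp_ext.
    apply/forallP => b; apply/implyP => /imsetP [w Hw ->].
    by rewrite dot_ext // restr_ext // Horth.
  case=> Ha /forallP H; rewrite -(ext_restr inj Ha); apply: imset_f.
  rewrite H8sumP; apply/forallP => w; apply/implyP => Hw.
  move/implyP: (H (ext sigma w)) => /(_ (imset_f _ Hw)).
  by rewrite dotC dot_ext // dotC.
- exists sigma; split => //.
  apply/setP => v; apply/imsetP/idP => [[_ /imsetP [w Hw ->] ->]|Hv].
    by rewrite restr_ext.
  by exists (ext sigma v); [apply: imset_f | rewrite restr_ext].
Qed.

Definition tl m (T : {set 'I_m}) : seq bool := [seq i \in T | i <- enum 'I_m].
Definition mb m (s : seq bool) (j : nat) : bool :=
  all (fun i => nth false s i ==> odd (j %/ 2 ^ i)) (iota 0 m).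
Definition ib m (s : seq bool) (j : nat) : bool :=
  all (fun i => odd (j %/ 2 ^ i) ==> nth false s i) (iota 0 m).

Lemma nth_tl m (T : {set 'I_m}) (i : 'I_m) : nth false (tl T) i = (i \in T).
Proof. by rewrite (nth_map i) ?nth_ord_enum // size_enum_ord. Qed.

Lemma size_tl m (T : {set 'I_m}) : size (tl T) = m.
Proof. by rewrite size_map size_enum_ord. Qed.

Lemma card_tl m (T : {set 'I_m}) : #|T| = count id (tl T).
Proof. by rewrite count_map -sum1_count big_enum_cond /= sum1_card. Qed.

Lemma prod_b (I : finType) (A : {pred I}) (F : I -> bool) :
  \prod_(i in A) ((F i)%:R : 'F_2) = ([forall (i | i \in A), F i])%:R.
Proof.
case: (boolP [forall (i | i \in A), F i]) => [/forall_inP H|/forall_inPn [i Hi /negbTE Fi]].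
  by rewrite big1 // => i /H ->.
by rewrite (bigD1 i) //= Fi mul0r.
Qed.

Lemma monomE m (T : {set 'I_m}) (j : 'I_(2 ^ m)) : monom T 0 j = (mb m (tl T) j)%:R.
Proof.
rewrite mxE prod_b /mb all_iota_ord; congr (_%:R).
congr nat_of_bool.
by apply/forallP/forallP => H i; move: (H i); rewrite nth_tl.
Qed.

Lemma rowbE n (f : nat -> bool) (j : 'I_n) : rowb n f 0 j = (f j)%:R.
Proof. by rewrite mxE. Qed.

Lemma tl_inj m : injective (@tl m).
Proof. by move=> T1 T2 H; apply/setP => i; rewrite -!nth_tl H. Qed.

Lemma sum_sets m (F : seq bool -> 'F_2) : uniq (lists m) ->
  \sum_(T : {set 'I_m}) F (tl T) = \sum_(l <- lists m) F l.
Proof.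
move=> Hu; rewrite -(big_map (@tl m) xpredT F); apply: perm_big.
apply: uniq_perm => //; first by rewrite map_inj_uniq ?index_enum_uniq //; apply: tl_inj.
move=> l; apply/mapP/idP => [[T _ ->]|Hl]; first by apply: mem_lists; rewrite size_tl.
exists [set i : 'I_m | nth false l i]; first by rewrite mem_index_enum.
apply: (@eq_from_nth _ false); rewrite ?size_tl ?(size_lists Hl) // => i Hi.
by rewrite -[i]/(val (Ordinal Hi)) nth_tl inE.
Qed.

Lemma RM_perp r m k (u : 'I_k -> word (2 ^ m)) (ub : nat -> nat -> bool) :
  (forall l j, u l 0 j = (ub l j)%:R) ->
  uniq (lists m) ->
  all (fun s => (count id s <= r)%N ==>
        all (fun l => ~~ dotb (mb m s) (ub l) (2 ^ m)) (iota 0 k)) (lists m) ->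
  all (fun s => (r < count id s)%N ==> in_spanb k ub (ib m s) (2 ^ m)) (lists m) ->
  all (fun j' => all (fun j => odd (count (fun s => ib m s j' && mb m s j) (lists m))
        == (j' == j)) (iota 0 (2 ^ m))) (iota 0 (2 ^ m)) ->
  RM r m = perp u.
Proof.
move=> Hu Huniq H1 H2 H3; apply/setP => x; apply/idP/idP.
  case/imsetP => c _ ->; apply/perpP => l; rewrite dotC dot_sum big1 // => T HT.
  rewrite dotZ (dot_b (Hu l) (monomE T)).
  move/allP: H1 => /(_ _ (mem_lists (size_tl T))) /implyP; rewrite -card_tl => /(_ HT).
  rewrite all_iota_ord => /forallP /(_ l).
by rewrite /dotb; under eq_count => j do rewrite andbC; move/negbTE ->; rewrite mulr0.
move=> Hx; apply/imsetP.
exists [ffun T => dot x (rowb (2 ^ m) (ib m (tl T)))] => //.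
rewrite big_mkcond /=.
rewrite (eq_bigr (fun T => [ffun T => dot x (rowb (2 ^ m) (ib m (tl T)))] T *: monom T)); last first.
  move=> T _; case: ifP => // /negbT; rewrite -ltnNge => HT.
  rewrite ffunE (perp_span Hx) ?scale0r //.
  apply: (in_spanbP Hu (rowbE (ib m (tl T)))).
  by move/allP: H2 => /(_ _ (mem_lists (size_tl T))) /implyP; rewrite -card_tl; apply.
apply/rowP => j; rewrite summxE.
under eq_bigr => T _ do rewrite ffunE mxE monomE dotE mulr_suml.
rewrite exchange_big /=.
have Hj' : forall i : 'I_(2 ^ m), odd (count (fun s => ib m s i && mb m s j) (lists m)) = (i == j).
  move=> i; move/allP: H3 => /(_ i); rewrite mem_iota ltn_ord => /(_ isT) /allP /(_ j).
  by rewrite mem_iota ltn_ord => /(_ isT) /eqP.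
under eq_bigr => i _ do (under eq_bigr => T _ do rewrite rowbE -mulrA natrM_b;
  rewrite -mulr_sumr (sum_sets (fun s => (ib m s i && mb m s j)%:R) Huniq) sum_F2 sumb_count Hj').
rewrite (bigD1 j) //= eqxx mulr1 big1 ?addr0 // => i /negbTE ->.
by rewrite mulr0.
Qed.

Definition ub1 (l j : nat) : bool := if l is l'.+1 then odd (j %/ 2 ^ l') else true.
Definition u1 m (l : 'I_m.+1) : word (2 ^ m) := rowb (2 ^ m) (ub1 l).

Lemma RM24 : RM 2 4 = perp (@u1 4).
Proof.
apply: (RM_perp (ub := ub1)) => [l j||||]; first by rewrite rowbE.
all: by vm_compute.
Qed.

Lemma RM35 : RM 3 5 = perp (@u1 5).
Proof.
apply: (RM_perp (ub := ub1)) => [l j||||]; first by rewrite rowbE.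
all: by vm_compute.
Qed.

Definition u24b (l j : nat) : bool :=
  if (l < 3)%N then (j %/ 8 == l)%N else gHb (l - 3) (j %% 8).
Definition u24 (l : 'I_7) : word 24 := rowb 24 (u24b l).
Definition ones8 : word 8 := rowb 8 (fun _ => true).

Lemma blk_u24 (l : 'I_7) (b : 'I_3) :
  blk (u24 l) b = if (l < 3)%N then (if (b == l :> nat) then ones8 else 0)
                  else gH (inord (l - 3)).
Proof.
apply/rowP => t; rewrite blkE (@vv_blk 3 _ b t (lt_blk b t)) rowbE /u24b /=.
have [-> ->] := div_blk b (ltn_ord t).
case: ifP => Hl; first by case: ifP; rewrite mxE ?rowbE.
rewrite gHE inordK //; have := ltn_ord l; lia.
Qed.

Lemma wt_dot (z : word 8) : dot z ones8 = (odd (wt z))%:R.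
Proof.
rewrite dotE -F2_natr /wt -sum1_card.
rewrite (eq_bigr (fun t => (z 0 t != 0)%:R)) => [|t _]; last first.
  by rewrite rowbE mulr1 -F2_cases.
rewrite natr_sum [RHS]big_mkcond /=; apply: eq_bigr => t _; rewrite inE.
by case: (z 0 t != 0).
Qed.

Lemma dot_u24 (v : word 24) (l : 'I_7) :
  dot v (u24 l) = if (l < 3)%N then dot (blk v l) ones8
                  else dot (blk v 0 + blk v 1 + blk v 2) (gH (inord (l - 3))).
Proof.
rewrite (@dot_blocks 3); under eq_bigr => b _ do rewrite blk_u24.
case: ifP => Hl.
  rewrite (bigD1 (Ordinal Hl)) //= eqxx big1 ?addr0 // => b Hb.
  case: eqP => [Hbl|]; last by rewrite dot0.
  by case/eqP: Hb; apply: val_inj.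
rewrite dotC !dotD !big_ord_recr big_ord0 /= !(dotC (gH _)).
by rewrite -[0 + _]/(GRing.add 0 _) add0r.
Qed.

Lemma Code24_perp : Code24 = perp u24.
Proof.
apply/setP => v; rewrite !inE; apply/andP/forallP.
  case=> /forallP Hw; rewrite H8P => /forallP Hy l; rewrite dot_u24.
  case: ifP => Hl.
    by rewrite wt_dot; move: (Hw (Ordinal Hl)) => /negbTE /= ->.
  exact: Hy.
move=> H; split.
  apply/forallP => b; have Hb : (b < 7)%N by have := ltn_ord b; lia.
  move/eqP: (H (Ordinal Hb)); rewrite dot_u24 /= ltn_ord wt_dot.
  by case: (odd _); rewrite ?oner_eq0.
rewrite H8P; apply/forallP => l'.
have Hl : (l' + 3 < 7)%N by have := ltn_ord l'; lia.
move: (H (Ordinal Hl)); rewrite dot_u24 /=.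
have -> : (l' + 3 < 3)%N = false by lia.
have -> : (inord (l' + 3 - 3) : 'I_4) = l' by apply: val_inj; rewrite /= addnK inordK.
done.
Qed.

Definition gDb (l i : nat) : bool :=
  match l with
  | 0 => (i < 16)%N | 1 => (16 <= i < 32)%N | 2 => (32 <= i)%N
  | 3 => odd (i %/ 8) | 4 => odd (i %/ 4) | 5 => odd (i %/ 2) | _ => odd i end.

Lemma gDE (l : 'I_7) (i : 'I_48) : gD l 0 i = (gDb l i)%:R.
Proof. by rewrite mxE; case: l => [[|[|[|[|[|[|[|l]]]]]]] Hl]. Qed.

Definition spanlist k (hb : nat -> nat -> bool) n : seq (seq bool) :=
  [seq [seq comb hb a j | j <- iota 0 n] | a <- lists k].

Lemma in_spanbF k hb vb n :
  in_spanb k hb vb n = ([seq vb j | j <- iota 0 n] \in spanlist k hb n).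
Proof.
apply/hasP/mapP => [[a Ha /allP H]|[a Ha /esym H]]; exists a => //.
  by apply/eq_in_map => j /H /eqP ->.
by apply/allP => j Hj; apply/eqP; move/eq_in_map: H => /(_ j Hj).
Qed.

Definition spaneq k1 (hb : nat -> nat -> bool) k2 (ub : nat -> nat -> bool) n : bool :=
  let SU := spanlist k2 ub n in let SH := spanlist k1 hb n in
  all (fun l => [seq hb l j | j <- iota 0 n] \in SU) (iota 0 k1) &&
  all (fun l => [seq ub l j | j <- iota 0 n] \in SH) (iota 0 k2).

Lemma spaneq_perp n k1 k2 (h : 'I_k1 -> word n) (u : 'I_k2 -> word n) (hb ub : nat -> nat -> bool) :
  (forall l j, h l 0 j = (hb l j)%:R) -> (forall l j, u l 0 j = (ub l j)%:R) ->
  spaneq k1 hb k2 ub n -> perp h = perp u.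
Proof.
move=> Hh Hu; rewrite /spaneq /= => /andP []; rewrite !all_iota_ord => /forallP H1 /forallP H2.
have {}H1 (l : 'I_k1) : in_spanb k2 ub (hb l) n by rewrite in_spanbF; apply: H1.
have {}H2 (l : 'I_k2) : in_spanb k1 hb (ub l) n by rewrite in_spanbF; apply: H2.
apply: perp_eq => l; [exact: (in_spanbP Hu (Hh l) (H1 l)) | exact: (in_spanbP Hh (Hu l) (H2 l))].
Qed.

Definition h8chk (hb : nat -> nat -> bool) kb : bool :=
  all (fun l => all (fun b => in_spanb 4 gHb (fun t => hb l (b * 8 + t)%N) 8) (iota 0 kb)) (iota 0 7).

Lemma h8chkP kb (h : 'I_7 -> word (8 * kb)) (hb : nat -> nat -> bool) :
  (forall l j, h l 0 j = (hb l j)%:R) -> h8chk hb kb -> forall l, h l \in H8sum kb.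
Proof.
move=> Hh; rewrite /h8chk all_iota_ord => /forallP H l.
move: (H l); rewrite all_iota_ord => /forallP Hl.
rewrite inE; apply/forallP => b.
apply: (in_spanbP gHE _ (Hl b)) => t.
by rewrite blkE (vv_blk _ (lt_blk b t)) Hh.
Qed.

Definition sig (s : seq nat) n (j : 'I_n) : 'I_48 := inord (nth 0 s j).
Definition hbs (s : seq nat) (l j : nat) := gDb l (nth 0 s j).

Section Beta.
Variable P : nat -> bool.
Let s := filter P (iota 0 48).

Lemma s_lt j : (j < size s)%N -> (nth 0 s j < 48)%N.
Proof. by move=> Hj; have := mem_nth 0 Hj; rewrite mem_filter mem_iota => /andP [_]. Qed.

Lemma sigE n (j : 'I_n) : (n <= size s)%N -> val (sig s j) = nth 0 s j.
Proof. move=> Hn; rewrite /= inordK // s_lt //; exact: leq_trans (ltn_ord j) Hn. Qed.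

Lemma sig_inj n : (n <= size s)%N -> injective (@sig s n).
Proof.
move=> Hn j1 j2 /(congr1 val); rewrite !sigE // => H; apply: val_inj.
have Hu : uniq s by rewrite filter_uniq ?iota_uniq.
apply/eqP; rewrite -(@nth_uniq _ 0 s) ?H //; exact: leq_trans (ltn_ord _) Hn.
Qed.

Lemma sig_codom n : n = size s -> forall i : 'I_48, P i = (i \in codom (@sig s n)).
Proof.
move=> Hn i; apply/idP/codomP => [Hi|[j ->]].
  have Hin : val i \in s by rewrite mem_filter Hi mem_iota ltn_ord.
  have Hj : (index (val i) s < n)%N by rewrite Hn index_mem.
  exists (Ordinal Hj); apply: val_inj; rewrite sigE ?Hn //= nth_index //.
have Hj : (j < size s)%N by rewrite -Hn ltn_ord.
by rewrite sigE ?Hn //; have := mem_nth 0 Hj; rewrite mem_filter => /andP [].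
Qed.

Lemma restr_sigE n (l : 'I_7) (j : 'I_n) : (n <= size s)%N ->
  restr (@sig s n) (gD l) 0 j = (hbs s l j)%:R.
Proof. by move=> Hn; rewrite mxE gDE sigE. Qed.

End Beta.

Definition tabf k n (f : nat -> nat -> bool) : seq (seq bool) :=
  [seq [seq f l j | j <- iota 0 n] | l <- iota 0 k].
Definition look (t : seq (seq bool)) (l j : nat) : bool := nth false (nth [::] t l) j.

Lemma look_tab k n f l j : (l < k)%N -> (j < n)%N -> look (tabf k n f) l j = f l j.
Proof.
move=> Hl Hj; rewrite /look /tabf (nth_map 0) ?size_iota // nth_iota //.
by rewrite (nth_map 0) ?size_iota // nth_iota.
Qed.

Definition check_sh (s : seq nat) (hb : nat -> nat -> bool) : bool :=
  [|| size s == 0,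
      [&& size s == 16, spaneq 7 hb 5 (look (tabf 5 16 ub1)) 16 & h8chk hb 2],
      [&& size s == 24, spaneq 7 hb 7 (look (tabf 7 24 u24b)) 24 & h8chk hb 3],
      [&& size s == 32, spaneq 7 hb 6 (look (tabf 6 32 ub1)) 32 & h8chk hb 4] |
      (size s == 48) && h8chk hb 6].

Definition check (a : seq bool) : bool :=
  check_sh (filter (comb gDb a) (iota 0 48))
    (look (tabf 7 48 (hbs (filter (comb gDb a) (iota 0 48))))).

Lemma all_check : all check (lists 7).
Proof. by vm_compute. Qed.

Unset Implicit Arguments.

Theorem proposition6 : forall beta : word 48, beta \in D ->
  [/\ wt beta = 16%N -> code_iso (supp beta) (Cb beta) (RM 2 4),
      wt beta = 24%N -> code_iso (supp beta) (Cb beta) Code24,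
      wt beta = 32%N -> code_iso (supp beta) (Cb beta) (RM 3 5),
      wt beta = 48%N -> Cb beta = C
    & beta != 0 ->
      exists S : {set word 48},
        [/\ S \subset Cb beta, self_dual_on (supp beta) S
          & code_iso (supp beta) S (H8sum (wt beta %/ 8))]].
Proof.
move=> beta /imsetP [c _ Hbeta].
have Ha : cl c \in lists 7 := mem_lists (size_cl c).
have Hchk := allP all_check _ Ha.
rewrite /check in Hchk.
move: Hchk.
set P := comb gDb (cl c).
set s := filter P (iota 0 48).
set hb := look (tabf 7 48 (hbs s)).
move=> Hchk.
have HbE : forall i : 'I_48, beta 0 i = (P i)%:R.
  by move=> i; rewrite Hbeta (comb_sum _ _ gDE).
have Hsupp : forall i : 'I_48, (i \in supp beta) = P i.
  by move=> i; rewrite inE HbE F2_bneq0.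
have Hwt : wt beta = size s.
  rewrite /wt size_filter -sum1_count -sum1_card.
  rewrite (eq_bigl (fun i : 'I_48 => P i)) => [|i]; last by rewrite Hsupp.
  by rewrite -(big_mkord P (fun _ => 1%N)) /index_iota subn0.
have Hinj : forall n, n = size s -> injective (@sig s n).
  by move=> n Hn; apply: sig_inj; rewrite Hn.
have Hcod : forall n, n = size s -> forall i, (i \in supp beta) = (i \in codom (@sig s n)).
  by move=> n Hn i; rewrite Hsupp; apply: sig_codom.
have Hh : forall n, n = size s -> forall (l : 'I_7) (j : 'I_n),
    restr (@sig s n) (gD l) 0 j = (hb l j)%:R.
  move=> n Hn l j; rewrite restr_sigE ?Hn // /hb look_tab //.
  apply: leq_trans (ltn_ord j) _; rewrite Hn /s size_filter.
  by have := count_size P (iota 0 48); rewrite size_iota.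
have Himg : forall n, n = size s ->
    [set restr (@sig s n) a | a in Cb beta] = perp (fun l => restr (@sig s n) (gD l)).
  by move=> n Hn; apply: restr_Cb; [apply: Hinj | apply: Hcod].
have Hfin : forall k, (8 * k)%N = size s -> h8chk hb k ->
    exists S : {set word 48},
      [/\ S \subset Cb beta, self_dual_on (supp beta) S & code_iso (supp beta) S (H8sum k)].
  move=> k Hk H8; apply: (final_part (sigma := @sig s (8 * k))).
  - exact: Hinj.
  - exact: Hcod.
  - exact: (h8chkP (Hh _ Hk) H8).
have Hu16 : forall (l : 'I_5) (j : 'I_(2 ^ 4)), u1 l 0 j = (look (tabf 5 16 ub1) l j)%:R.
  by move=> l j; rewrite rowbE look_tab.
have Hu32 : forall (l : 'I_6) (j : 'I_(2 ^ 5)), u1 l 0 j = (look (tabf 6 32 ub1) l j)%:R.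
  by move=> l j; rewrite rowbE look_tab.
have Hu24 : forall (l : 'I_7) (j : 'I_24), u24 l 0 j = (look (tabf 7 24 u24b) l j)%:R.
  by move=> l j; rewrite rowbE look_tab.
rewrite /check_sh in Hchk.
case/orP: Hchk => [/eqP H0|/orP [/and3P [/eqP E Sp H8]|/orP [/and3P [/eqP E Sp H8]|
  /orP [/and3P [/eqP E Sp H8]|/andP [/eqP E H8]]]]].
- split; rewrite ?Hwt ?H0 // => Hne.
  case/eqP: Hne; apply/rowP => i; rewrite HbE mxE.
  have HPi : P i = false.
    apply/negbTE/negP => Hp.
    have : val i \in s by rewrite mem_filter Hp mem_iota /= ltn_ord.
    by rewrite (size0nil H0).
  by rewrite HPi.
- split; rewrite ?Hwt ?E // => _.
    exists (@sig s (2 ^ 4)); split; [exact: Hinj | exact: Hcod |].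
    rewrite Himg // RM24; exact: (spaneq_perp (Hh _ (esym E)) Hu16 Sp).
  by apply: Hfin; rewrite ?E.
- split; rewrite ?Hwt ?E // => _.
    exists (@sig s 24); split; [exact: Hinj | exact: Hcod |].
    rewrite Himg // Code24_perp; exact: (spaneq_perp (Hh _ (esym E)) Hu24 Sp).
  by apply: Hfin; rewrite ?E.
- split; rewrite ?Hwt ?E // => _.
    exists (@sig s (2 ^ 5)); split; [exact: Hinj | exact: Hcod |].
    rewrite Himg // RM35; exact: (spaneq_perp (Hh _ (esym E)) Hu32 Sp).
  by apply: Hfin; rewrite ?E.
- split; rewrite ?Hwt ?E // => _.
    have HP : forall i : 'I_48, P i.
      move=> i; have : all P (iota 0 48) by rewrite all_count -size_filter E.
      by move/allP; apply; rewrite mem_iota ltn_ord.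
    apply/setP => x; rewrite inE; apply/andP/idP => [[]//|Hx]; split => //.
    by apply/subsetP => i _; rewrite Hsupp HP.
  by apply: Hfin; rewrite ?E.
Qed.
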